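(* Let $(M,g)$ be a smooth $2$-dimensional Riemannian manifold with Gaussian curvature $K$. For a point $x\in M$ and a unit vector $\xi\in S_xM$, let $\gamma=\gamma_{x,\xi}$ be the unit-speed geodesic with $\gamma(0)=x$, $\dot\gamma(0)=\xi$, and write $K_\gamma(t)=K(\gamma_{x,\xi}(t))$. Define $a=a(x,\xi,t)$ and $b=b(x,\xi,t)$ as the solutions of the scalar Jacobi equations \[ a''+K_\gamma a=0,\quad a(x,\xi,0)=1,\ a'(x,\xi,0)=0,\qquad b''+K_\gamma b=0,\quad b(x,\xi,0)=0,\ b'(x,\xi,0)=1, \] where primes denote derivatives with respect to $t$. Let $\varphi=b\,\partial_\theta a-a\,\partial_\theta b$. Then $\varphi$ satisfies the ordinary differential equation \[ \varphi^{(3)}+4K_\gamma\varphi'+2K_\gamma'\varphi=-2\,\partial_\theta K_\gamma, \] with initial conditions $\varphi(0)=\varphi'(0)=\varphi''(0)=0$.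
   Context: For a unit vector $\xi\in S_xM$, $\xi_\perp$ denotes the unit vector in $T_xM$ obtained by rotating $\xi$ by $+\pi/2$ (so $\{\xi,\xi_\perp\}$ is a positively oriented orthonormal basis). For a smooth function $u(x,\xi,t)$ (with $(x,\xi)$ in the unit sphere bundle $SM$ and $t$ in the interval of definition of $\gamma_{x,\xi}$), the derivative $\partial_\theta$ is the derivative with respect to rotation of the initial direction: $\partial_\theta u(x,\xi,t)=\frac{d}{ds}\big|_{s=0}u(x,\xi(s),t)$, where $\xi(s)$ is a smooth curve in $S_xM$ with $\xi(0)=\xi$ and $\xi'(0)=\xi_\perp$. In particular $\partial_\theta K_\gamma(t)=\frac{d}{ds}\big|_{s=0}K(\gamma_{x,\xi(s)}(t))$. The functions $a,b$ (and hence $\varphi$) are considered as functions of $(x,\xi,t)$, and derivatives $'$ are with respect to $t$. *)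

(* Defs.v *)
From Stdlib Require Import Reals Lra List.
From Coquelicot Require Import Coquelicot.
Open Scope R_scope.

(* Partial derivatives of a function f(s,t) of two real variables.
   s = rotation parameter of the initial direction (theta),
   t = geodesic time. *)
Definition dS (f : R -> R -> R) : R -> R -> R :=
  fun s t => Derive (fun s' => f s' t) s.
Definition dT (f : R -> R -> R) : R -> R -> R :=
  fun s t => Derive (fun t' => f s t') t.

Fixpoint pderiv (w : list bool) (f : R -> R -> R) : R -> R -> R :=
  match w with
  | nil => f
  | b :: w' => if b then dS (pderiv w' f) else dT (pderiv w' f)
  end.

Definition smooth_on (P : R -> R -> Prop) (f : R -> R -> R) : Prop :=
  forall (w : list bool) (s t : R), P s t ->
    ex_derive (fun s' => pderiv w f s' t) s /\
    ex_derive (fun t' => pderiv w f s t') t /\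
    continuous (fun p : R * R => pderiv w f (fst p) (snd p)) (s, t).

(* Main.v *)
Require Import Defs.
From Stdlib Require Import Reals Lra List Classical ClassicalEpsilon.
From Coquelicot Require Import Coquelicot.
Open Scope R_scope.

Lemma d_eq (f : R -> R) (x l1 l2 : R) : is_derive f x l1 -> l1 = l2 -> is_derive f x l2.
Proof. intros H ->; exact H. Qed.

Lemma d_mul (f g : R -> R) x df dg : is_derive f x df -> is_derive g x dg ->
  is_derive (fun u => f u * g u) x (df * g x + f x * dg).
Proof. intros Hf Hg. apply (is_derive_mult f g x df dg Hf Hg). intros; apply Rmult_comm. Qed.

Lemma d_plus (f g : R -> R) x df dg : is_derive f x df -> is_derive g x dg ->
  is_derive (fun u => f u + g u) x (df + dg).
Proof. intros Hf Hg. apply (is_derive_plus f g x df dg Hf Hg). Qed.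

Lemma d_minus (f g : R -> R) x df dg : is_derive f x df -> is_derive g x dg ->
  is_derive (fun u => f u - g u) x (df - dg).
Proof. intros Hf Hg. apply (is_derive_minus f g x df dg Hf Hg). Qed.

Lemma d_const (a x : R) : is_derive (fun _ => a) x 0.
Proof. apply (is_derive_const a x). Qed.

Lemma d_expc (c x : R) : is_derive (fun u => exp (c * u)) x (c * exp (c * x)).
Proof.
  apply d_eq with (scal c (exp (c*x))).
  apply (is_derive_comp exp (fun u => c * u) x (exp (c*x)) c).
  apply is_derive_exp.
  apply d_eq with (c * 1). apply is_derive_scal. apply (is_derive_id x). apply Rmult_1_r.
  simpl. unfold scal; simpl; unfold mult; simpl. ring.
Qed.

Lemma loc_int l r t : l < t < r -> locally t (fun u => l < u < r).
Proof.
  intros [H1 H2].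
  assert (Hp : 0 < Rmin (t - l) (r - t)) by (apply Rmin_pos; lra).
  exists (mkposreal _ Hp). intros u Hu. change (Rabs (u - t) < Rmin (t - l) (r - t)) in Hu.
  apply Rabs_lt_between' in Hu. destruct Hu as [Hu1 Hu2].
  pose proof (Rmin_l (t-l) (r-t)); pose proof (Rmin_r (t-l) (r-t)). lra.
Qed.

Lemma deriv_cont (f : R -> R) x : ex_derive f x -> continuity_pt f x.
Proof. intros H. apply continuity_pt_filterlim. apply (ex_derive_continuous f x H). Qed.

Lemma lip (f df : R -> R) a b M :
  (forall x, Rmin a b <= x <= Rmax a b -> is_derive f x (df x) /\ Rabs (df x) <= M) ->
  Rabs (f b - f a) <= M * Rabs (b - a).
Proof.
  intros H.
  destruct (MVT_gen f a b df) as [c [Hc Heq]].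
  - intros x Hx. apply H. lra.
  - intros x Hx. apply deriv_cont. eexists. apply H. exact Hx.
  - rewrite Heq, Rabs_mult. apply Rmult_le_compat_r. apply Rabs_pos. apply H. exact Hc.
Qed.

Lemma in_dom l r t x : l < 0 < r -> l < t < r -> Rmin 0 t <= x <= Rmax 0 t -> l < x < r.
Proof. intros H1 H2. unfold Rmin, Rmax. destruct (Rle_dec 0 t); lra. Qed.

Lemma abs_le_split a M : Rabs a <= M -> -M <= a <= M.
Proof. intros H. split. pose proof (Rle_abs (-a)). rewrite Rabs_Ropp in H0. lra.
  pose proof (Rle_abs a); lra. Qed.

Lemma gronwall (l r t M G : R) (y y1 q g : R -> R) :
  l < 0 < r -> l < t < r -> 0 <= M -> 0 <= G ->
  (forall u, l < u < r -> is_derive y u (y1 u) /\ is_derive y1 u (- q u * y u + g u)) ->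
  y 0 = 0 -> y1 0 = 0 ->
  (forall u, Rmin 0 t <= u <= Rmax 0 t -> Rabs (q u) <= M /\ Rabs (g u) <= G) ->
  Rabs (y t) <= G * (exp ((M + 2) * Rabs t) + 1).
Proof.
  intros H0 Ht HM HG Hd Hy0 Hy10 Hb.
  set (c := M + 2).
  set (e := fun u => y u * y u + y1 u * y1 u).
  set (de := fun u => 2 * y u * y1 u + 2 * y1 u * (- q u * y u + g u)).
  assert (Hde : forall u, l < u < r -> is_derive e u (de u)).
  { intros u Hu. destruct (Hd u Hu) as [D1 D2]. unfold e, de.
    eapply d_eq. apply d_plus; apply d_mul; eassumption. ring. }
  assert (Hdb : forall u, Rmin 0 t <= u <= Rmax 0 t ->
             de u <= c * e u + G * G /\ - de u <= c * e u + G * G).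
  { intros u Hu. destruct (Hb u Hu) as [Bq Bg].
    apply abs_le_split in Bq. apply abs_le_split in Bg.
    unfold de, e, c.
    set (Y := y u) in *. set (Y1 := y1 u) in *. set (Q := q u) in *. set (Gu := g u) in *. clearbody Y Y1 Q Gu.
    assert (F1 : 0 <= (Y - Y1) * (Y - Y1)) by (apply Rle_0_sqr).
    assert (F1' : 0 <= (Y + Y1) * (Y + Y1)) by (apply Rle_0_sqr).
    assert (F2 : 0 <= (M + Q) * ((Y + Y1) * (Y + Y1))) by (apply Rmult_le_pos; lra).
    assert (F3 : 0 <= (M - Q) * ((Y - Y1) * (Y - Y1))) by (apply Rmult_le_pos; lra).
    assert (F4 : Gu * Gu <= G * G) by nra.
    assert (F5 : 0 <= (Y1 - Gu) * (Y1 - Gu)) by (apply Rle_0_sqr).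
    assert (F6 : 0 <= (Y1 + Gu) * (Y1 + Gu)) by (apply Rle_0_sqr).
    assert (F7 : 0 <= M * (Y * Y + Y1 * Y1)) by (apply Rmult_le_pos; nra).
    split; nra. }
  assert (Het : 0 <= e t) by (unfold e; pose proof (Rle_0_sqr (y t)); pose proof (Rle_0_sqr (y1 t)); unfold Rsqr in *; lra).
  assert (Hc : 0 < c) by (unfold c; lra).
  assert (Hcont : forall (h dh : R -> R), (forall u, l < u < r -> is_derive h u (dh u)) ->
            exists xi, Rmin 0 t <= xi <= Rmax 0 t /\ h t - h 0 = dh xi * (t - 0)).
  { intros h dh Hh. apply (MVT_gen h 0 t dh).
    - intros x Hx. apply Hh. apply (in_dom l r t x H0 Ht). lra.
    - intros x Hx. apply deriv_cont. eexists. apply Hh. apply (in_dom l r t x H0 Ht). lra. }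
  assert (Hkey : c * e t <= G * G * exp (c * Rabs t)).
  { destruct (Rle_dec 0 t) as [Hpos | Hneg].
    - destruct (Hcont (fun u => (c * e u + G * G) * exp (- c * u))
                (fun u => (c * de u) * exp (- c * u) + (c * e u + G * G) * (- c * exp (- c * u))))
        as [xi [Hxi Heq]].
      { intros u Hu. apply (d_mul (fun u => c * e u + G * G) (fun u => exp (- c * u))). eapply d_eq. apply d_plus. apply is_derive_scal. apply Hde; exact Hu.
        apply d_const. ring. apply d_expc. }
      destruct (Hdb xi Hxi) as [B1 B2].
      assert (Ex : 0 < exp (- c * xi)) by apply exp_pos.
      assert (Hdn : (c * de xi) * exp (- c * xi) + (c * e xi + G * G) * (- c * exp (- c * xi)) <= 0).
      { replace ((c * de xi) * exp (- c * xi) + (c * e xi + G * G) * (- c * exp (- c * xi)))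
          with ((c * exp (- c * xi)) * (de xi - c * e xi - G * G)) by ring.
        assert (0 < c * exp (- c * xi)) by (apply Rmult_lt_0_compat; lra). nra. }
      assert (He0 : e 0 = 0) by (unfold e; rewrite Hy0, Hy10; ring).
      rewrite He0 in Heq. replace (- c * 0) with 0 in Heq by ring. rewrite exp_0 in Heq.
      assert (Hle : (c * e t + G * G) * exp (- c * t) <= G * G) by nra.
      rewrite Rabs_pos_eq by lra.
      assert (Hm : exp (- c * t) * exp (c * t) = 1) by (rewrite <- exp_plus; replace (- c * t + c * t) with 0 by ring; apply exp_0).
      assert (Ep : 0 < exp (c * t)) by apply exp_pos.
      assert (Hle2 : (c * e t + G * G) * exp (- c * t) * exp (c * t) <= G * G * exp (c * t))
        by (apply Rmult_le_compat_r; lra).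
      replace ((c * e t + G * G) * exp (- c * t) * exp (c * t)) with (c * e t + G * G) in Hle2
        by (rewrite Rmult_assoc, Hm; ring).
      nra.
    - destruct (Hcont (fun u => (c * e u + G * G) * exp (c * u))
                (fun u => (c * de u) * exp (c * u) + (c * e u + G * G) * (c * exp (c * u))))
        as [xi [Hxi Heq]].
      { intros u Hu. apply (d_mul (fun u => c * e u + G * G) (fun u => exp (c * u))). eapply d_eq. apply d_plus. apply is_derive_scal. apply Hde; exact Hu.
        apply d_const. ring. apply d_expc. }
      destruct (Hdb xi Hxi) as [B1 B2].
      assert (Ex : 0 < exp (c * xi)) by apply exp_pos.
      assert (Hdn : 0 <= (c * de xi) * exp (c * xi) + (c * e xi + G * G) * (c * exp (c * xi))).
      { replace ((c * de xi) * exp (c * xi) + (c * e xi + G * G) * (c * exp (c * xi)))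
          with ((c * exp (c * xi)) * (de xi + c * e xi + G * G)) by ring.
        assert (0 < c * exp (c * xi)) by (apply Rmult_lt_0_compat; lra). nra. }
      assert (He0 : e 0 = 0) by (unfold e; rewrite Hy0, Hy10; ring).
      rewrite He0 in Heq. replace (c * 0) with 0 in Heq by ring. rewrite exp_0 in Heq.
      assert (Hle : (c * e t + G * G) * exp (c * t) <= G * G) by nra.
      rewrite Rabs_left by lra.
      assert (Hm : exp (c * t) * exp (c * - t) = 1) by (rewrite <- exp_plus; replace (c * t + c * - t) with 0 by ring; apply exp_0).
      assert (Ep : 0 < exp (c * - t)) by apply exp_pos.
      assert (Hle2 : (c * e t + G * G) * exp (c * t) * exp (c * - t) <= G * G * exp (c * - t))
        by (apply Rmult_le_compat_r; lra).
      replace ((c * e t + G * G) * exp (c * t) * exp (c * - t)) with (c * e t + G * G) in Hle2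
        by (rewrite Rmult_assoc, Hm; ring).
      nra. }
  set (X := exp (c * Rabs t)) in *.
  assert (HX : 0 < X) by apply exp_pos.
  assert (Hy2 : y t * y t <= G * G * X).
  { assert (e t <= c * e t) by (unfold c; nra). unfold e in *. nra. }
  fold c. fold X.
  assert (HB : 0 <= G * (X + 1)) by (apply Rmult_le_pos; lra).
  assert (HGX : G * G * X <= (G * (X + 1)) * (G * (X + 1))).
  { assert (0 <= G * G) by (apply Rmult_le_pos; lra).
    assert (0 <= G * G * (X * X + X + 1)) by (apply Rmult_le_pos; [lra| pose proof (Rle_0_sqr X); unfold Rsqr in *; lra]).
    nra. }
  rewrite <- (Rabs_pos_eq (G * (X + 1))) by exact HB.
  assert (Hs : Rsqr (y t) <= Rsqr (G * (X + 1))) by (unfold Rsqr; lra).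
  exact (Rsqr_le_abs_0 _ _ Hs).
Qed.

Lemma sm_ds (P : R -> R -> Prop) k w s t : smooth_on P k -> P s t ->
  is_derive (fun s' => pderiv w k s' t) s (pderiv (true :: w) k s t).
Proof. intros H Hp. destruct (H w s t Hp) as [A [B C]]. simpl. unfold dS. apply Derive_correct; exact A. Qed.

Lemma sm_dt (P : R -> R -> Prop) k w s t : smooth_on P k -> P s t ->
  is_derive (fun t' => pderiv w k s t') t (pderiv (false :: w) k s t).
Proof. intros H Hp. destruct (H w s t Hp) as [A [B C]]. simpl. unfold dT. apply Derive_correct; exact B. Qed.

Lemma sm_c2 (P : R -> R -> Prop) k w s t : smooth_on P k -> P s t ->
  continuity_2d_pt (pderiv w k) s t.
Proof. intros H Hp. destruct (H w s t Hp) as [A [B C]]. apply continuity_2d_pt_filterlim. exact C. Qed.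

Lemma strip_bound (f : R -> R -> R) p q : p <= q ->
  (forall x, p <= x <= q -> continuity_2d_pt f 0 x) ->
  exists d B, 0 < d /\ forall s x, Rabs s < d -> p <= x <= q -> Rabs (f s x) <= B.
Proof.
  intros Hpq Hc.
  destruct (bounded_continuity (fun x => f 0 x) p q) as [M0 HM0].
  { intros x Hx. apply continuity_pt_filterlim. apply continuity_pt_locally. intros eps.
    apply (locally_2d_1d_const_x (fun u v => Rabs (f u v - f 0 x) < eps) 0 x). apply Hc; auto. }
  assert (Hex : forall x, exists rho : posreal, p <= x <= q -> forall u v,
     Rabs (u - 0) < rho -> Rabs (v - x) < rho -> Rabs (f u v - f 0 x) < 1).
  { intros x. destruct (classic (p <= x <= q)) as [H|H].
    - destruct (Hc x H (mkposreal 1 Rlt_0_1)) as [rho Hrho]. exists rho. intros _. exact Hrho.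
    - exists (mkposreal 1 Rlt_0_1). intros; contradiction. }
  set (rho := fun x => proj1_sig (constructive_indefinite_description _ (Hex x))).
  destruct (compactness_value_1d p q rho) as [d Hd].
  exists d, (M0 + 1). split. apply cond_pos. intros s x Hs Hx.
  specialize (Hd x Hx). apply NNPP in Hd. destruct Hd as [t0 [Ht0 [Hxt Hdt]]].
  pose proof (proj2_sig (constructive_indefinite_description _ (Hex t0))) as Hr. simpl in Hr.
  assert (H1 : Rabs (f s x - f 0 t0) < 1).
  { apply Hr. exact Ht0. unfold rho in Hdt. rewrite Rminus_0_r. lra.
    unfold rho in Hxt. exact Hxt. }
  assert (H2 : Rabs (f 0 t0) < M0) by (apply HM0; exact Ht0).
  replace (f s x) with ((f s x - f 0 t0) + f 0 t0) by ring.
  pose proof (Rabs_triang (f s x - f 0 t0) (f 0 t0)). lra.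
Qed.

Lemma between_abs h x : Rmin 0 h <= x <= Rmax 0 h -> Rabs x <= Rabs h.
Proof. unfold Rmin, Rmax. destruct (Rle_dec 0 h); unfold Rabs; destruct (Rcase_abs x), (Rcase_abs h); lra. Qed.

Lemma abs_lt x a : Rabs x < a -> -a < x < a.
Proof. intros H. apply Rabs_def2 in H. lra. Qed.

Lemma bound1 (f : R -> R) p q : p <= q -> (forall x, p <= x <= q -> ex_derive f x) ->
  exists A, 0 <= A /\ forall x, p <= x <= q -> Rabs (f x) <= A.
Proof.
  intros Hpq Hd. destruct (bounded_continuity f p q) as [A HA].
  { intros x Hx. apply (ex_derive_continuous f x). apply Hd; exact Hx. }
  exists A. split.
  - pose proof (HA p (conj (Rle_refl p) Hpq)). pose proof (Rabs_pos (f p)). change (Rabs (f p) < A) in H. lra.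
  - intros x Hx. apply Rlt_le. apply (HA x Hx).
Qed.

Lemma var_deriv (delta l r : R) (k y y1 : R -> R -> R) (al al1 : R -> R) (c0 c1 t : R) :
  0 < delta -> l < 0 < r ->
  smooth_on (fun s t => -delta < s < delta /\ l < t < r) k ->
  (forall s, -delta < s < delta -> forall u, l < u < r ->
      is_derive (y s) u (y1 s u) /\ is_derive (y1 s) u (- k s u * y s u)) ->
  (forall s, -delta < s < delta -> y s 0 = c0 /\ y1 s 0 = c1) ->
  (forall u, l < u < r -> is_derive al u (al1 u) /\
      is_derive al1 u (- k 0 u * al u - dS k 0 u * y 0 u)) ->
  al 0 = 0 -> al1 0 = 0 -> l < t < r ->
  is_derive (fun s => y s t) 0 (al t).
Proof.
  intros Hdel Hlr Hsm Hy Hy0 Hal Hal0 Hal10 Ht.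
  set (p := Rmin 0 t). set (q := Rmax 0 t).
  assert (Hpq : p <= q) by (unfold p, q, Rmin, Rmax; destruct (Rle_dec 0 t); lra).
  assert (Hin : forall x, p <= x <= q -> l < x < r) by (intros; apply (in_dom l r t); auto).
  assert (Hdom0 : forall x, p <= x <= q -> -delta < 0 < delta /\ l < x < r)
    by (intros x Hx; split; [lra | apply Hin; exact Hx]).
  destruct (strip_bound (pderiv nil k) p q Hpq) as [d0 [B0 [Hd0 HB0]]].
  { intros x Hx. apply (sm_c2 _ k nil 0 x Hsm (Hdom0 x Hx)). }
  destruct (strip_bound (pderiv (true :: nil) k) p q Hpq) as [d1 [B1 [Hd1 HB1]]].
  { intros x Hx. apply (sm_c2 _ k _ 0 x Hsm (Hdom0 x Hx)). }
  destruct (strip_bound (pderiv (true :: true :: nil) k) p q Hpq) as [d2 [B2 [Hd2 HB2]]].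
  { intros x Hx. apply (sm_c2 _ k _ 0 x Hsm (Hdom0 x Hx)). }
  simpl in HB0, HB1, HB2.
  destruct (bound1 al p q Hpq) as [A [HA0 HA]].
  { intros x Hx. eexists. apply Hal. apply Hin; exact Hx. }
  destruct (bound1 (y 0) p q Hpq) as [Y [HY0 HY]].
  { intros x Hx. eexists. apply (Hy 0 ltac:(lra)). apply Hin; exact Hx. }
  assert (Hp_in : p <= p <= q) by lra.
  assert (HB0p : 0 <= B0) by (pose proof (HB0 0 p ltac:(rewrite Rabs_R0; lra) Hp_in); pose proof (Rabs_pos (k 0 p)); lra).
  assert (HB1p : 0 <= B1) by (pose proof (HB1 0 p ltac:(rewrite Rabs_R0; lra) Hp_in); pose proof (Rabs_pos (dS k 0 p)); lra).
  assert (HB2p : 0 <= B2) by (pose proof (HB2 0 p ltac:(rewrite Rabs_R0; lra) Hp_in); pose proof (Rabs_pos (dS (dS k) 0 p)); lra).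
  set (X := exp ((B0 + 2) * Rabs t) + 1).
  assert (HX : 0 < X) by (unfold X; pose proof (exp_pos ((B0 + 2) * Rabs t)); lra).
  set (C := (B1 * A + B2 * Y) * X).
  assert (HC : 0 <= C) by (unfold C; apply Rmult_le_pos; [|lra]; pose proof (Rmult_le_pos _ _ HB1p HA0); pose proof (Rmult_le_pos _ _ HB2p HY0); lra).
  set (d := Rmin (Rmin d0 d1) (Rmin d2 delta)).
  assert (Hd : 0 < d) by (unfold d; repeat apply Rmin_pos; lra).
  assert (Hdd : d <= d0 /\ d <= d1 /\ d <= d2 /\ d <= delta).
  { unfold d. pose proof (Rmin_l (Rmin d0 d1) (Rmin d2 delta)). pose proof (Rmin_r (Rmin d0 d1) (Rmin d2 delta)).
    pose proof (Rmin_l d0 d1). pose proof (Rmin_r d0 d1). pose proof (Rmin_l d2 delta). pose proof (Rmin_r d2 delta). lra. }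
  assert (Hest : forall h, Rabs h < d ->
     Rabs (y h t - y 0 t - h * al t) <= h * h * C).
  { intros h Hh.
    assert (Hhd : -delta < h < delta) by (apply abs_lt; lra).
    assert (Hk1 : forall u, p <= u <= q -> Rabs (k h u - k 0 u) <= B1 * Rabs h).
    { intros u Hu. rewrite <- (Rminus_0_r h) at 2.
      apply (lip (fun s => k s u) (fun s => dS k s u) 0 h B1).
      intros s Hs. pose proof (between_abs h s Hs) as Hsa. split.
      - apply (sm_ds _ k nil s u Hsm). split. apply abs_lt. lra. apply Hin; exact Hu.
      - apply HB1. lra. exact Hu. }
    assert (Hk2 : forall u, p <= u <= q -> Rabs (k h u - k 0 u - h * dS k 0 u) <= B2 * Rabs h * Rabs h).
    { intros u Hu.
      replace (k h u - k 0 u - h * dS k 0 u) with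
        ((fun s => k s u - s * dS k 0 u) h - (fun s => k s u - s * dS k 0 u) 0) by (simpl; ring).
      replace (B2 * Rabs h * Rabs h) with (B2 * Rabs h * Rabs (h - 0)) by (rewrite Rminus_0_r; ring).
      apply (lip (fun s => k s u - s * dS k 0 u) (fun s => dS k s u - dS k 0 u) 0 h (B2 * Rabs h)).
      intros s Hs. pose proof (between_abs h s Hs) as Hsa. split.
      - apply (d_eq _ _ (dS k s u - 1 * dS k 0 u)); [|ring].
        apply d_minus.
        + apply (sm_ds _ k nil s u Hsm). split. apply abs_lt. lra. apply Hin; exact Hu.
        + apply (d_eq _ _ (1 * dS k 0 u + s * 0)); [|ring].
          apply (d_mul (fun s => s) (fun _ => dS k 0 u) s 1 0).
          apply (is_derive_id s). apply d_const.
      - replace (Rabs h) with (Rabs h) by reflexivity.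
        assert (Hl : Rabs (dS k s u - dS k 0 u) <= B2 * Rabs (s - 0)).
        { apply (lip (fun s => dS k s u) (fun s => dS (dS k) s u) 0 s B2).
          intros s' Hs'. pose proof (between_abs s s' Hs') as Hsa'. split.
          - apply (sm_ds _ k (true :: nil) s' u Hsm). split. apply abs_lt. lra. apply Hin; exact Hu.
          - apply HB2. lra. exact Hu. }
        rewrite Rminus_0_r in Hl. pose proof (Rmult_le_compat_l B2 _ _ HB2p Hsa). lra. }
    set (g := fun u => - (k h u - k 0 u) * h * al u - (k h u - k 0 u - h * dS k 0 u) * y 0 u).
    assert (HGp : 0 <= h * h * (B1 * A + B2 * Y)).
    { apply Rmult_le_pos. pose proof (Rle_0_sqr h); unfold Rsqr in *; lra.
      pose proof (Rmult_le_pos _ _ HB1p HA0); pose proof (Rmult_le_pos _ _ HB2p HY0); lra. }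
    assert (Hh0 : y h 0 = c0 /\ y1 h 0 = c1) by (apply Hy0; exact Hhd).
    assert (H00 : y 0 0 = c0 /\ y1 0 0 = c1) by (apply Hy0; lra).
    assert (Hg := gronwall l r t B0 (h * h * (B1 * A + B2 * Y))
       (fun u => y h u - y 0 u - h * al u) (fun u => y1 h u - y1 0 u - h * al1 u) (k h) g
       Hlr Ht HB0p HGp).
    assert (Hhh : Rabs h * Rabs h = h * h) by (rewrite <- Rabs_mult; apply Rabs_pos_eq; pose proof (Rle_0_sqr h); unfold Rsqr in *; lra).
    assert (Hfin : Rabs (y h t - y 0 t - h * al t) <= h * h * (B1 * A + B2 * Y) * (exp ((B0 + 2) * Rabs t) + 1)).
    { apply Hg.
      - intros u Hu. destruct (Hy h Hhd u Hu) as [D1 D2]. destruct (Hy 0 ltac:(lra) u Hu) as [E1 E2].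
        destruct (Hal u Hu) as [F1 F2]. split.
        + apply d_minus; [apply d_minus|apply is_derive_scal]; assumption.
        + eapply d_eq. apply d_minus; [apply d_minus|apply is_derive_scal]; eassumption. unfold g; ring.
      - simpl. rewrite (proj1 Hh0), (proj1 H00), Hal0. ring.
      - simpl. rewrite (proj2 Hh0), (proj2 H00), Hal10. ring.
      - intros u Hu. split.
        + apply HB0. lra. exact Hu.
        + assert (T : Rabs (g u) <= Rabs (k h u - k 0 u) * Rabs h * Rabs (al u)
                      + Rabs (k h u - k 0 u - h * dS k 0 u) * Rabs (y 0 u)).
          { unfold g. replace (- (k h u - k 0 u) * h * al u - (k h u - k 0 u - h * dS k 0 u) * y 0 u)
              with (- ((k h u - k 0 u) * h * al u) + - ((k h u - k 0 u - h * dS k 0 u) * y 0 u)) by ring.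
            eapply Rle_trans. apply Rabs_triang. rewrite !Rabs_Ropp, !Rabs_mult. lra. }
          assert (P1 : Rabs (k h u - k 0 u) * Rabs h * Rabs (al u) <= (B1 * Rabs h) * Rabs h * A).
          { apply Rmult_le_compat. apply Rmult_le_pos; apply Rabs_pos. apply Rabs_pos.
            apply Rmult_le_compat_r. apply Rabs_pos. apply Hk1; exact Hu. apply HA; exact Hu. }
          assert (P2 : Rabs (k h u - k 0 u - h * dS k 0 u) * Rabs (y 0 u) <= (B2 * Rabs h * Rabs h) * Y).
          { apply Rmult_le_compat. apply Rabs_pos. apply Rabs_pos. apply Hk2; exact Hu. apply HY; exact Hu. }
          replace (h * h * (B1 * A + B2 * Y)) with ((B1 * Rabs h) * Rabs h * A + (B2 * Rabs h * Rabs h) * Y).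
          lra. rewrite <- Hhh. ring. }
    unfold C, X. replace (h * h * ((B1 * A + B2 * Y) * (exp ((B0 + 2) * Rabs t) + 1)))
      with (h * h * (B1 * A + B2 * Y) * (exp ((B0 + 2) * Rabs t) + 1)) by ring. exact Hfin. }
  apply is_derive_Reals. intros eps Heps.
  assert (He : 0 < eps / (C + 1)) by (apply Rdiv_lt_0_compat; lra).
  assert (Hm : 0 < Rmin d (eps / (C + 1))) by (apply Rmin_pos; lra).
  exists (mkposreal _ Hm). intros h Hnz Hh. simpl in Hh.
  pose proof (Rmin_l d (eps / (C + 1))). pose proof (Rmin_r d (eps / (C + 1))).
  rewrite Rplus_0_l.
  assert (Hab : 0 < Rabs h) by (apply Rabs_pos_lt; exact Hnz).
  assert (Hhh : Rabs h * Rabs h = h * h) by (rewrite <- Rabs_mult; apply Rabs_pos_eq; pose proof (Rle_0_sqr h); unfold Rsqr in *; lra).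
  pose proof (Hest h ltac:(lra)) as E.
  replace ((y h t - y 0 t) / h - al t) with ((y h t - y 0 t - h * al t) / h) by (field; exact Hnz).
  unfold Rdiv. rewrite Rabs_mult, Rabs_inv.
  apply Rle_lt_trans with (Rabs h * C).
  - replace (Rabs h * C) with ((Rabs h * Rabs h * C) * / Rabs h) by (field; lra).
    apply Rmult_le_compat_r. left; apply Rinv_0_lt_compat; exact Hab. rewrite Hhh; exact E.
  - assert (Rabs h * (C + 1) < eps).
    { apply Rlt_le_trans with (eps / (C + 1) * (C + 1)). apply Rmult_lt_compat_r; lra.
      unfold Rdiv. rewrite Rmult_assoc, Rinv_l by lra. lra. }
    nra.
Qed.

Lemma ftc (F : R -> R) l r u : l < 0 < r -> l < u < r ->
  (forall x, l < x < r -> continuous F x) ->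
  is_derive (fun v => RInt F 0 v) u (F u).
Proof.
  intros H0 Hu HF. apply (is_derive_RInt F (fun v => RInt F 0 v) 0 u).
  - apply (filter_imp (fun v => l < v < r)).
    + intros b Hb. apply (RInt_correct F 0 b). apply ex_RInt_continuous.
      intros z Hz. apply HF. apply (in_dom l r b z H0 Hb Hz).
    + apply loc_int; exact Hu.
  - apply HF; exact Hu.
Qed.

Lemma cont_pt (f : R -> R) x : continuity_pt f x -> continuous f x.
Proof. intros H. apply continuity_pt_filterlim. exact H. Qed.

Theorem lemma2p1
  (delta l r : R) (k a a1 b b1 : R -> R -> R) :
  0 < delta -> l < 0 < r ->
  smooth_on (fun s t => -delta < s < delta /\ l < t < r) k ->
  (forall s, -delta < s < delta ->
     (forall t, l < t < r ->
        is_derive (a s) t (a1 s t) /\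
        is_derive (a1 s) t (- k s t * a s t) /\
        is_derive (b s) t (b1 s t) /\
        is_derive (b1 s) t (- k s t * b s t)) /\
     a s 0 = 1 /\ a1 s 0 = 0 /\ b s 0 = 0 /\ b1 s 0 = 1) ->
  let phi := fun t => b 0 t * dS a 0 t - a 0 t * dS b 0 t in
  exists phi1 phi2 phi3 : R -> R,
    (forall t, l < t < r ->
       is_derive phi t (phi1 t) /\
       is_derive phi1 t (phi2 t) /\
       is_derive phi2 t (phi3 t) /\
       phi3 t + 4 * k 0 t * phi1 t + 2 * dT k 0 t * phi t
         = - 2 * dS k 0 t) /\
    phi 0 = 0 /\ phi1 0 = 0 /\ phi2 0 = 0.
Proof.
  intros Hdel Hlr Hsm Hsol phi.
  assert (H0 : -delta < 0 < delta) by lra.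
  destruct (Hsol 0 H0) as [Hd0 [Ia [Ia1 [Ib Ib1]]]].
  assert (Hkd : forall u, l < u < r -> is_derive (k 0) u (dT k 0 u)).
  { intros u Hu. apply (sm_dt _ k nil 0 u Hsm). split; [exact H0 | exact Hu]. }
  assert (Hkc : forall u, l < u < r -> continuity_pt (dS k 0) u).
  { intros u Hu. apply continuity_pt_locally. intros eps.
    apply (locally_2d_1d_const_x (fun s v => Rabs (dS k s v - dS k 0 u) < eps) 0 u).
    apply (sm_c2 _ k (true :: nil) 0 u Hsm). split; [exact H0 | exact Hu]. }
  assert (Hac : forall u, l < u < r -> continuity_pt (a 0) u /\ continuity_pt (b 0) u).
  { intros u Hu. destruct (Hd0 u Hu) as [D1 [D2 [D3 D4]]]. split; apply deriv_cont; eexists; eassumption. }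
  assert (HW : forall u, l < u < r -> a 0 u * b1 0 u - a1 0 u * b 0 u = 1).
  { intros u Hu.
    destruct (MVT_gen (fun v => a 0 v * b1 0 v - a1 0 v * b 0 v) 0 u (fun _ => 0)) as [c [Hc Heq]].
    - intros x Hx. assert (Hx' : l < x < r) by (apply (in_dom l r u x Hlr Hu); lra).
      destruct (Hd0 x Hx') as [D1 [D2 [D3 D4]]].
      eapply d_eq. apply d_minus; apply d_mul; eassumption. ring.
    - intros x Hx. assert (Hx' : l < x < r) by (apply (in_dom l r u x Hlr Hu); lra).
      destruct (Hd0 x Hx') as [D1 [D2 [D3 D4]]].
      apply deriv_cont. eexists. apply d_minus; apply d_mul; eassumption.
    - rewrite Ia, Ia1, Ib, Ib1 in Heq. lra. }
  set (FP := fun u => dS k 0 u * (a 0 u * a 0 u)).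
  set (FQ := fun u => dS k 0 u * (a 0 u * b 0 u)).
  set (FS := fun u => dS k 0 u * (b 0 u * b 0 u)).
  assert (HFc : forall u, l < u < r -> continuous FP u /\ continuous FQ u /\ continuous FS u).
  { intros u Hu. destruct (Hac u Hu) as [C1 C2]. pose proof (Hkc u Hu) as C3.
    unfold FP, FQ, FS. split; [|split]; apply cont_pt; apply continuity_pt_mult; try assumption;
      apply continuity_pt_mult; assumption. }
  set (P := fun v => RInt FP 0 v). set (Q := fun v => RInt FQ 0 v). set (S := fun v => RInt FS 0 v).
  assert (HPQS : forall u, l < u < r -> is_derive P u (FP u) /\ is_derive Q u (FQ u) /\ is_derive S u (FS u)).
  { intros u Hu. split; [|split]; apply (ftc _ l r u Hlr Hu); intros x Hx; apply (HFc x Hx). }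
  assert (P0 : P 0 = 0) by (unfold P; rewrite RInt_point; reflexivity).
  assert (Q0 : Q 0 = 0) by (unfold Q; rewrite RInt_point; reflexivity).
  assert (S0 : S 0 = 0) by (unfold S; rewrite RInt_point; reflexivity).
  set (al := fun u => a 0 u * Q u - b 0 u * P u).
  set (al1 := fun u => a1 0 u * Q u - b1 0 u * P u).
  set (be := fun u => a 0 u * S u - b 0 u * Q u).
  set (be1 := fun u => a1 0 u * S u - b1 0 u * Q u).
  assert (Hal : forall u, l < u < r -> is_derive al u (al1 u) /\
      is_derive al1 u (- k 0 u * al u - dS k 0 u * a 0 u)).
  { intros u Hu. destruct (Hd0 u Hu) as [D1 [D2 [D3 D4]]]. destruct (HPQS u Hu) as [E1 [E2 E3]].
    pose proof (HW u Hu) as W. split.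
    - eapply d_eq. apply d_minus; apply d_mul; eassumption. unfold al1, FP, FQ. ring.
    - eapply d_eq. apply d_minus; apply d_mul; eassumption.
      unfold al, FP, FQ.
      transitivity (- k 0 u * (a 0 u * Q u - b 0 u * P u) - dS k 0 u * a 0 u * (a 0 u * b1 0 u - a1 0 u * b 0 u)).
      ring. rewrite W. ring. }
  assert (Hbe : forall u, l < u < r -> is_derive be u (be1 u) /\
      is_derive be1 u (- k 0 u * be u - dS k 0 u * b 0 u)).
  { intros u Hu. destruct (Hd0 u Hu) as [D1 [D2 [D3 D4]]]. destruct (HPQS u Hu) as [E1 [E2 E3]].
    pose proof (HW u Hu) as W. split.
    - eapply d_eq. apply d_minus; apply d_mul; eassumption. unfold be1, FS, FQ. ring.
    - eapply d_eq. apply d_minus; apply d_mul; eassumption.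
      unfold be, FS, FQ.
      transitivity (- k 0 u * (a 0 u * S u - b 0 u * Q u) - dS k 0 u * b 0 u * (a 0 u * b1 0 u - a1 0 u * b 0 u)).
      ring. rewrite W. ring. }
  assert (al0 : al 0 = 0) by (unfold al; rewrite P0, Q0; ring).
  assert (al10 : al1 0 = 0) by (unfold al1; rewrite P0, Q0; ring).
  assert (be0 : be 0 = 0) by (unfold be; rewrite S0, Q0; ring).
  assert (be10 : be1 0 = 0) by (unfold be1; rewrite S0, Q0; ring).
  assert (Hda : forall u, l < u < r -> dS a 0 u = al u).
  { intros u Hu. unfold dS. apply is_derive_unique.
    apply (var_deriv delta l r k a a1 al al1 1 0 u Hdel Hlr Hsm).
    - intros s Hs v Hv. destruct (Hsol s Hs) as [D _]. destruct (D v Hv) as [D1 [D2 _]]. split; assumption.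
    - intros s Hs. destruct (Hsol s Hs) as [_ [E1 [E2 _]]]. split; assumption.
    - exact Hal.
    - exact al0. - exact al10. - exact Hu. }
  assert (Hdb : forall u, l < u < r -> dS b 0 u = be u).
  { intros u Hu. unfold dS. apply is_derive_unique.
    apply (var_deriv delta l r k b b1 be be1 0 1 u Hdel Hlr Hsm).
    - intros s Hs v Hv. destruct (Hsol s Hs) as [D _]. destruct (D v Hv) as [_ [_ [D3 D4]]]. split; assumption.
    - intros s Hs. destruct (Hsol s Hs) as [_ [_ [_ [E3 E4]]]]. split; assumption.
    - exact Hbe.
    - exact be0. - exact be10. - exact Hu. }
  set (psi := fun u => b 0 u * al u - a 0 u * be u).
  set (phi1 := fun u => b1 0 u * al u + b 0 u * al1 u - (a1 0 u * be u + a 0 u * be1 u)).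
  set (phi2 := fun u => 2 * (b1 0 u * al1 u - a1 0 u * be1 u) - 2 * (k 0 u * psi u)).
  set (phi3 := fun u => - 2 * dT k 0 u * psi u - 4 * k 0 u * phi1 u - 2 * dS k 0 u).
  assert (Hpp : forall u, l < u < r -> phi u = psi u).
  { intros u Hu. unfold phi, psi. rewrite Hda, Hdb by exact Hu. reflexivity. }
  assert (Hpsi : forall u, l < u < r -> is_derive psi u (phi1 u)).
  { intros u Hu. destruct (Hd0 u Hu) as [D1 [D2 [D3 D4]]]. destruct (Hal u Hu) as [A1 A2].
    destruct (Hbe u Hu) as [B1 B2].
    eapply d_eq. apply d_minus; apply d_mul; eassumption. unfold phi1. ring. }
  exists phi1, phi2, phi3. split; [|split; [|split]].
  - intros t Ht. destruct (Hd0 t Ht) as [D1 [D2 [D3 D4]]]. destruct (Hal t Ht) as [A1 A2].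
    destruct (Hbe t Ht) as [B1 B2]. pose proof (HW t Ht) as W.
    split; [|split; [|split]].
    + apply (is_derive_ext_loc psi phi). apply (filter_imp (fun u => l < u < r)).
      intros u Hu. symmetry. apply Hpp; exact Hu. apply loc_int; exact Ht. apply Hpsi; exact Ht.
    + eapply d_eq. apply d_minus; apply d_plus; apply d_mul; eassumption.
      unfold phi2, psi. ring.
    + eapply d_eq. apply d_minus; apply is_derive_scal.
      apply d_minus; apply d_mul; eassumption.
      apply d_mul. apply Hkd; exact Ht. apply Hpsi; exact Ht.
      unfold phi3.
      transitivity (- 2 * dT k 0 t * psi t - 4 * k 0 t * phi1 t - 2 * dS k 0 t * (a 0 t * b1 0 t - a1 0 t * b 0 t)).
      unfold phi1. ring. rewrite W. ring.
    + rewrite (Hpp t Ht). unfold phi3. ring.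
  - rewrite (Hpp 0 ltac:(lra)). unfold psi. rewrite al0, be0. ring.
  - unfold phi1. rewrite al0, be0, al10, be10. ring.
  - unfold phi2, psi. rewrite al0, be0, al10, be10. ring.
Qed.
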